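(* Let $(\mathcal{K}_i)_{i\ge1}$ be a sequence of ME-consistent $\mathcal{ALCP}$ knowledge bases over $\mathcal{L}$ converging to an ME-consistent knowledge base $\mathcal{K}$, let $C,D$ be concepts and $\kappa\in\mathcal{L}$, and write $\mathcal{B}_{\mathcal{K}_i}(C\sqsubseteq D\mid\kappa)=[\ell_i,u_i]$ and $\mathcal{B}_{\mathcal{K}}(C\sqsubseteq D\mid\kappa)=[\ell,u]$. Then $\ell_i\to\ell$ and $u_i\to u$ in $\mathbb{R}$.
   Context: $\mathcal{L}$ is a propositional language over a finite set of variables; $\mathrm{Int}(\mathcal{L})$ is the set of truth assignments. A probability distribution over $\mathcal{L}$ is $P:\mathrm{Int}(\mathcal{L})\to[0,1]$ summing to $1$ (a vector in $\mathbb{R}^{\mathrm{Int}(\mathcal{L})}$), with $P(\phi)=\sum_{v\models\phi}P(v)$. A probabilistic constraint is $c_0+\sum_{i=1}^k c_i\,\mathsf{p}(\phi_i)\ge 0$ ($c_i\in\mathbb{R}$, $\phi_i\in\mathcal{L}$), satisfied by $P$ iff $c_0+\sum_ic_iP(\phi_i)\ge0$; $\mathrm{Mod}(\mathcal{R})$ is the set of distributions satisfying all constraints in $\mathcal{R}$; for consistent $\mathcal{R}$, $P^{ME}_{\mathcal{R}}$ is the unique maximizer in $\mathrm{Mod}(\mathcal{R})$ of $H(P)=-\sum_vP(v)\log P(v)$. Concepts: $C::=A\mid\neg C\mid C\sqcap C\mid\exists r.C$. An $\mathcal{L}$-GCI is $\langle C\sqsubseteq D:\kappa\rangle$, $\kappa\in\mathcal{L}$;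 an $\mathcal{L}$-TBox is a finite set of them; a KB is $\mathcal{K}=(\mathcal{R},\mathcal{T})$. A possible world $\mathcal{I}=(\Delta^{\mathcal{I}},\cdot^{\mathcal{I}},v^{\mathcal{I}})$ is a classical $\mathcal{ALC}$ interpretation together with $v^{\mathcal{I}}\in\mathrm{Int}(\mathcal{L})$; it models $\langle C\sqsubseteq D:\kappa\rangle$ iff $v^{\mathcal{I}}\not\models\kappa$ or $C^{\mathcal{I}}\subseteq D^{\mathcal{I}}$; $\mathrm{Mod}(\mathcal{T})$ is the set of possible worlds modelling all GCIs of $\mathcal{T}$. An $\mathcal{ALCP}$-interpretation $\mathcal{P}=(\mathfrak{I},P_{\mathfrak{I}})$ is a nonempty finite set of possible worlds with a probability distribution on it; $P^{\mathcal{P}}(v)=\sum_{\mathcal{I}\in\mathfrak{I},v^{\mathcal{I}}=v}P_{\mathfrak{I}}(\mathcal{I})$. $\mathcal{P}$ is an ME-$\mathcal{ALCP}$-model of $\mathcal{K}$ iff $\mathfrak{I}\subseteq\mathrm{Mod}(\mathcal{T})$ and $P^{\mathcal{P}}=P^{ME}_{\mathcal{R}}$; $\mathrm{Mod}_{ME}(\mathcal{K})$ is the set of these; $\mathcal{K}$ is ME-consistent iff it is nonempty. $\Pr_{\mathcal{P}}(C\sqsubseteq D\mid\kappa)=\big(\sum_{\mathcal{I}\in\mathfrak{I},v^{\mathcal{I}}\models\kappa,C^{\mathcal{I}}\subseteq D^{\mathcal{I}}}P_{\mathfrak{I}}(\mathcal{I})\big)/\big(\sum_{\mathcal{I}\in\mathfrak{I},v^{\mathcal{I}}\models\kappa}P_{\mathfrak{I}}(\mathcal{I})\big)$.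 The belief interval $\mathcal{B}_{\mathcal{K}}(C\sqsubseteq D\mid\kappa)$ is $[\inf,\sup]$ of $\Pr_{\mathcal{P}}(C\sqsubseteq D\mid\kappa)$ over $\mathcal{P}\in\mathrm{Mod}_{ME}(\mathcal{K})$. The Blaschke distance between convex sets $S_1,S_2$ of distributions is $\inf\{\delta\in\mathbb{R}\mid \forall P_1\in S_1\exists P_2\in S_2: \|P_1-P_2\|\le\delta \text{ and } \forall P_2\in S_2\exists P_1\in S_1:\|P_2-P_1\|\le\delta\}$, with $\|\cdot\|$ the Euclidean norm. A sequence $\mathcal{K}_i=(\mathcal{R}_i,\mathcal{T}_i)$ converges to $\mathcal{K}=(\mathcal{R},\mathcal{T})$ iff $\mathrm{Mod}(\mathcal{T}_i)=\mathrm{Mod}(\mathcal{T})$ for all $i$ and $\mathrm{Mod}(\mathcal{R}_i)$ converges to $\mathrm{Mod}(\mathcal{R})$ in the Blaschke distance. *)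

(* Defs.v *)
From HB Require Import structures.
From mathcomp Require Import all_boot all_order all_algebra.
From mathcomp Require Import all_classical all_reals all_analysis.
From Stdlib Require Lists.List.
Set Implicit Arguments. Unset Strict Implicit. Unset Printing Implicit Defensive.
Import Order.TTheory GRing.Theory Num.Theory.
Import numFieldNormedType.Exports.
Local Open Scope classical_set_scope.
Local Open Scope ring_scope.

Inductive pform (V : Type) : Type :=
| FVar of V
| FTop
| FBot
| FNeg of pform V
| FAnd of pform V & pform V
| FOr of pform V & pform V
| FImp of pform V & pform V.
Arguments FTop {V}. Arguments FBot {V}.

Definition interp (V : finType) := {ffun V -> bool}.

Fixpoint fsat (V : finType) (v : interp V) (f : pform V) : bool :=
  match f with
  | FVar x => v x
  | FTop => true
  | FBot => false
  | FNeg g => ~~ fsat v g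
  | FAnd g h => fsat v g && fsat v h
  | FOr g h => fsat v g || fsat v h
  | FImp g h => fsat v g ==> fsat v h
  end.

Section Prob.
Variables (R : realType) (V : finType).

Definition dvec := {ffun interp V -> R}.

Definition is_distr (P : dvec) : Prop :=
  (forall v, 0 <= P v <= 1) /\ \sum_(v : interp V) P v = 1.

Definition probf (P : dvec) (phi : pform V) : R := \sum_(v : interp V | fsat v phi) P v.

Record pconstr := PConstr { pc_c0 : R; pc_terms : seq (R * pform V) }.

Definition sat_pconstr (P : dvec) (c : pconstr) : Prop :=
  0 <= pc_c0 c + \sum_(t <- pc_terms c) t.1 * probf P t.2.

Definition ModR (rs : seq pconstr) : set dvec :=
  [set P | is_distr P /\ forall c, Stdlib.Lists.List.In c rs -> sat_pconstr P c].

(* entropy H(P) = - sum_v P(v) log P(v)  (with 0 log 0 = 0, as ln 0 = 0 here) *)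
Definition entropy (P : dvec) : R := - \sum_(v : interp V) P v * ln (P v).

Definition is_ME (rs : seq pconstr) (P : dvec) : Prop :=
  ModR rs P /\ forall Q, ModR rs Q -> entropy Q <= entropy P.

Definition edist (P1 P2 : dvec) : R :=
  Num.sqrt (\sum_(v : interp V) (P1 v - P2 v) ^+ 2).

Definition blaschke (S1 S2 : set dvec) : R :=
  inf [set d : R |
        (forall P1, S1 P1 -> exists P2, S2 P2 /\ edist P1 P2 <= d) /\
        (forall P2, S2 P2 -> exists P1, S1 P1 /\ edist P2 P1 <= d)].
End Prob.

Inductive concept (NC NR : Type) : Type :=
| CAtom of NC
| CNeg of concept NC NR
| CAnd of concept NC NR & concept NC NR
| CEx of NR & concept NC NR.

Record pworld (V : finType) (NC NR : Type) := PWorld {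
  pw_dom : Type;
  pw_elt : pw_dom;                                (* domain is nonempty *)
  pw_cn : NC -> set pw_dom;
  pw_rn : NR -> pw_dom -> pw_dom -> Prop;
  pw_val : interp V
}.
Arguments pw_cn {V NC NR} p _ _.
Arguments pw_rn {V NC NR} p _ _ _.
Arguments pw_val {V NC NR} p.
Arguments pw_dom {V NC NR} p.

Section Ext.
Variables (V : finType) (NC NR : Type) (I : pworld V NC NR).
Fixpoint cext (C : concept NC NR) : set (pw_dom I) :=
  match C with
  | CAtom A => pw_cn I A
  | CNeg C' => ~` cext C'
  | CAnd C1 C2 => cext C1 `&` cext C2
  | CEx r C' => [set x | exists y, pw_rn I r x y /\ cext C' y]
  end.
End Ext.
Arguments cext {V NC NR} I C.

Record gci (V : finType) (NC NR : Type) :=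
  GCI { g_lhs : concept NC NR; g_rhs : concept NC NR; g_ctx : pform V }.

Definition models_gci (V : finType) (NC NR : Type) (I : pworld V NC NR)
  (g : gci V NC NR) : Prop :=
  ~~ fsat (pw_val I) (g_ctx g) \/ cext I (g_lhs g) `<=` cext I (g_rhs g).

Definition ModT (V : finType) (NC NR : Type) (T : seq (gci V NC NR))
  (I : pworld V NC NR) : Prop :=
  forall g, Stdlib.Lists.List.In g T -> models_gci I g.

Definition kb (R : realType) (V : finType) (NC NR : Type) :=
  (seq (pconstr R V) * seq (gci V NC NR))%type.

(* ALCP-interpretation: a nonempty finite family of possible worlds with a
   probability distribution on it (nonemptiness follows from summing to 1). *)
Record alcp (R : realType) (V : finType) (NC NR : Type) := ALCP {
  ap_W : finType;
  ap_world : ap_W -> pworld V NC NR;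
  ap_pr : ap_W -> R;
  ap_pr_ge0 : forall w, 0 <= ap_pr w;
  ap_pr_sum1 : \sum_(w : ap_W) ap_pr w = 1
}.
Arguments ap_W {R V NC NR} a.
Arguments ap_world {R V NC NR} a _.
Arguments ap_pr {R V NC NR} a _.

Section ALCP.
Variables (R : realType) (V : finType) (NC NR : Type).

Definition induced (P : alcp R V NC NR) : dvec R V :=
  [ffun v => \sum_(w : ap_W P | pw_val (ap_world P w) == v) ap_pr P w].

Definition ME_model (K : kb R V NC NR) (P : alcp R V NC NR) : Prop :=
  (forall w, ModT K.2 (ap_world P w)) /\ is_ME K.1 (induced P).

Definition ME_consistent (K : kb R V NC NR) : Prop :=
  exists P, ME_model K P.

Definition ctx_mass (P : alcp R V NC NR) (kappa : pform V) : R :=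
  \sum_(w : ap_W P | fsat (pw_val (ap_world P w)) kappa) ap_pr P w.

Definition condprob (P : alcp R V NC NR) (C D : concept NC NR) (kappa : pform V) : R :=
  (\sum_(w : ap_W P | fsat (pw_val (ap_world P w)) kappa &&
                      `[< cext (ap_world P w) C `<=` cext (ap_world P w) D >]) ap_pr P w)
  / ctx_mass P kappa.

Definition belief_values (K : kb R V NC NR) (C D : concept NC NR) (kappa : pform V) : set R :=
  [set x | exists P, ME_model K P /\ x = condprob P C D kappa].

Definition belief_lo K C D kappa : R := inf (belief_values K C D kappa).
Definition belief_hi K C D kappa : R := sup (belief_values K C D kappa).

(* the belief interval is defined: the conditioning context has positive
   probability in every ME-model *)
Definition belief_defined (K : kb R V NC NR) (kappa : pform V) : Prop :=
  forall P, ME_model K P -> 0 < ctx_mass P kappa.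

Definition kb_converges (Ks : nat -> kb R V NC NR) (K : kb R V NC NR) : Prop :=
  (forall i (I : pworld V NC NR), ModT (Ks i).2 I <-> ModT K.2 I) /\
  ((fun i => blaschke (ModR (Ks i).1) (ModR K.1)) @ \oo --> (0 : R)).
End ALCP.

(* Main.v *)
Require Import Defs.
From HB Require Import structures.
From mathcomp Require Import all_boot all_order all_algebra.
From mathcomp Require Import all_classical all_reals all_analysis.
From mathcomp Require Import ring lra.
Import Order.TTheory GRing.Theory Num.Theory.
Import numFieldNormedType.Exports.
Local Open Scope classical_set_scope.
Local Open Scope ring_scope.
Lemma ln_le_sub1 (R : realType) (x : R) : 0 < x -> ln x <= x - 1.
Proof.
move=> x0; have := @le_ln1Dx R (x - 1); rewrite [1 + _]addrC subrK; apply; lra.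
Qed.

Lemma ln_sqr (R : realType) (x : R) : 0 < x -> ln (x ^+ 2) = 2 * ln x.
Proof. by move=> x0; rewrite lnXn // mulr_natl. Qed.

Lemma key1 (R : realType) (a m : R) : 0 <= a -> 0 < m ->
  2 * a - 2 * Num.sqrt a * Num.sqrt m <= a * ln a - a * ln m.
Proof.
move=> a0 m0; have [->|ap] := eqVneq a 0.
  by rewrite sqrtr0 !mul0r mulr0 mul0r subrr.
have a1 : 0 < a by rewrite lt0r ap.
set al := Num.sqrt a; set mu := Num.sqrt m.
have al0 : 0 < al by rewrite sqrtr_gt0.
have mu0 : 0 < mu by rewrite sqrtr_gt0.
have ea : a = al ^+ 2 by rewrite sqr_sqrtr // ltW.
have em : m = mu ^+ 2 by rewrite sqr_sqrtr // ltW.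
have la : ln a = 2 * ln al by rewrite ea ln_sqr.
have lm : ln m = 2 * ln mu by rewrite em ln_sqr.
rewrite la lm.
have h : ln (mu / al) <= mu / al - 1 by apply: ln_le_sub1; exact: divr_gt0.
rewrite ln_div ?posrE // in h.
have : al ^+ 2 * (ln mu - ln al) <= al ^+ 2 * (mu / al - 1) by rewrite ler_pM2l ?exprn_gt0.
have -> : al ^+ 2 * (mu / al - 1) = al * mu - al ^+ 2.
  by field; rewrite gt_eqF.
rewrite ea; nra.
Qed.

Lemma poly1 (R : realType) (al be s : R) : 0 <= al -> 0 <= be -> 0 <= s ->
  al <= 1 -> be <= 1 -> s ^+ 2 = (al ^+ 2 + be ^+ 2) / 2 ->
  (al ^+ 2 - be ^+ 2) ^+ 2 / 8 <= 2 * (al ^+ 2 + be ^+ 2) - 2 * s * (al + be).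
Proof.
move=> a0 b0 s0 a1 b1 hs.
have hs' : 2 * s ^+ 2 = al ^+ 2 + be ^+ 2 by rewrite hs; field.
have h1 : al + be <= 2 * s.
  have : (al + be) ^+ 2 <= (2 * s) ^+ 2 by have := sqr_ge0 (al - be); nra.
  by rewrite ler_pXn2r // ?nnegrE; nra.
have h2 : (2 * s - (al + be)) * (2 * s + (al + be)) = (al - be) ^+ 2 by nra.
have h3 : (al - be) ^+ 2 / 2 <= 2 * (al ^+ 2 + be ^+ 2) - 2 * s * (al + be).
  have -> : 2 * (al ^+ 2 + be ^+ 2) - 2 * s * (al + be) = 2 * s * (2 * s - (al + be)) by rewrite -hs'; ring.
  rewrite -h2; have := sqr_ge0 (2 * s - (al + be)); nra.
have h4 : (al ^+ 2 - be ^+ 2) ^+ 2 <= 4 * (al - be) ^+ 2.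
  have -> : (al ^+ 2 - be ^+ 2) ^+ 2 = (al - be) ^+ 2 * (al + be) ^+ 2 by ring.
  have : (al + be) ^+ 2 <= 4 by nra.
  have : 0 <= (al - be) ^+ 2 by exact: sqr_ge0.
  nra.
lra.
Qed.

Lemma key2 (R : realType) (a b : R) : 0 <= a <= 1 -> 0 <= b <= 1 ->
  (a - b) ^+ 2 / 8 <= a * ln a + b * ln b - (a + b) * ln ((a + b) / 2).
Proof.
move=> /andP[a0 a1] /andP[b0 b1].
have [ab0|abp] := eqVneq (a + b) 0.
  have ea : a = 0 by lra.
  have eb : b = 0 by lra.
  rewrite ea eb !mul0r; lra.
have m0 : 0 < (a + b) / 2.
  by apply: divr_gt0 => //; rewrite lt0r abp /= addr_ge0.
have k1 := @key1 R _ _ a0 m0; have k2 := @key1 R _ _ b0 m0.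
have p := @poly1 R (Num.sqrt a) (Num.sqrt b) (Num.sqrt ((a + b) / 2))
  (sqrtr_ge0 _) (sqrtr_ge0 _) (sqrtr_ge0 _).
rewrite !sqr_sqrtr ?(ltW m0) // in p.
have : Num.sqrt a <= 1 by rewrite -sqrtr1 ler_sqrt.
have : Num.sqrt b <= 1 by rewrite -sqrtr1 ler_sqrt.
move=> hb ha; have := p ha hb erefl; lra.
Qed.

Lemma nlog_bound (R : realType) (d : R) : 0 <= d -> - (d * ln d) <= 2 * Num.sqrt d.
Proof.
move=> d0; have [->|dp] := eqVneq d 0; first by rewrite mul0r oppr0 sqrtr0 mulr0.
have d1 : 0 < d by rewrite lt0r dp.
set s := Num.sqrt d.
have s0 : 0 < s by rewrite sqrtr_gt0.
have ed : d = s ^+ 2 by rewrite sqr_sqrtr // ltW.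
have ld : ln d = 2 * ln s by rewrite ed ln_sqr.
have h : ln (s^-1) <= s^-1 - 1 by apply: ln_le_sub1; rewrite invr_gt0.
rewrite lnV ?posrE // in h.
rewrite ld {1}ed.
have : s ^+ 2 * (- ln s) <= s ^+ 2 * (s^-1 - 1) by rewrite ler_pM2l ?exprn_gt0.
have -> : s ^+ 2 * (s^-1 - 1) = s - s ^+ 2 by field; rewrite gt_eqF.
nra.
Qed.

Lemma phi_le1 (R : realType) (x y : R) : 0 <= x -> x <= y -> y <= 1 ->
  x * ln x - y * ln y <= 2 * Num.sqrt (y - x).
Proof.
move=> x0 xy y1.
have d0 : 0 <= y - x by lra.
have := @nlog_bound R _ d0.
have hx : x * ln x <= x * ln y.
  have [->|xp] := eqVneq x 0; first by rewrite !mul0r.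
  have x1 : 0 < x by rewrite lt0r xp.
  by rewrite ler_pM2l // ler_ln // ?posrE; lra.
have hd : (y - x) * ln (y - x) <= (y - x) * ln y.
  have [->|dp] := eqVneq (y - x) 0; first by rewrite !mul0r.
  have d1 : 0 < y - x by rewrite lt0r dp.
  by rewrite ler_pM2l // ler_ln // ?posrE; lra.
have -> : y * ln y = x * ln y + (y - x) * ln y by ring.
lra.
Qed.

Lemma phi_le2 (R : realType) (x y : R) : 0 <= x -> x <= y -> y <= 1 ->
  y * ln y - x * ln x <= 2 * Num.sqrt (y - x).
Proof.
move=> x0 xy y1.
have d0 : 0 <= y - x by lra.
have hs : y - x <= Num.sqrt (y - x).
  have d1 : y - x <= 1 by lra.
  have e : y - x = Num.sqrt (y - x) ^+ 2 by rewrite sqr_sqrtr.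
  have s1 : Num.sqrt (y - x) <= 1 by rewrite -sqrtr1 ler_sqrt.
  have s0 := sqrtr_ge0 (y - x).
  rewrite {1}e; nra.
have ly : ln y <= 0 by exact: ln_le0.
have hx : x * ln y - x * ln x <= y - x.
  have [->|xp] := eqVneq x 0; first by rewrite !mul0r subrr; lra.
  have x1 : 0 < x by rewrite lt0r xp.
  have y0 : 0 < y by lra.
  have h : ln (y / x) <= y / x - 1 by apply: ln_le_sub1; exact: divr_gt0.
  rewrite ln_div ?posrE // in h.
  have : x * (ln y - ln x) <= x * (y / x - 1) by rewrite ler_pM2l.
  have -> : x * (y / x - 1) = y - x by field; rewrite gt_eqF.
  lra.
have -> : y * ln y = x * ln y + (y - x) * ln y by ring.
have : (y - x) * ln y <= 0 by nra.
have := sqrtr_ge0 (y - x).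
lra.
Qed.

Lemma phi_cont (R : realType) (x y : R) : 0 <= x <= 1 -> 0 <= y <= 1 ->
  `|x * ln x - y * ln y| <= 2 * Num.sqrt `|x - y|.
Proof.
move=> /andP[x0 x1] /andP[y0 y1].
have [xy|yx] := lerP x y.
  rewrite ler_norml; apply/andP; split.
    have := @phi_le2 R _ _ x0 xy y1; lra.
  exact: (@phi_le1 R _ _ x0 xy y1).
have yx' : y <= x by exact: ltW.
rewrite ler_norml; apply/andP; split.
  have := @phi_le1 R _ _ y0 yx' x1; lra.
exact: (@phi_le2 R _ _ y0 yx' x1).
Qed.

Definition midp {R : realType} {V : finType} (P Q : dvec R V) : dvec R V :=
  [ffun v => (P v + Q v) / 2].

Lemma distr_range {R : realType} {V : finType} (P : dvec R V) v :
  is_distr P -> 0 <= P v <= 1.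
Proof. by case=> h _; exact: h. Qed.

Lemma strong_conc (R : realType) (V : finType) (P Q : dvec R V) :
  is_distr P -> is_distr Q ->
  Defs.edist P Q ^+ 2 / 16 <= entropy (midp P Q) - (entropy P + entropy Q) / 2.
Proof.
move=> hP hQ; rewrite /Defs.edist sqr_sqrtr; last by apply: sumr_ge0 => v _; exact: sqr_ge0.
rewrite /entropy.
have -> : - \sum_v midp P Q v * ln (midp P Q v) - (- \sum_v P v * ln (P v) + - \sum_v Q v * ln (Q v)) / 2
   = (\sum_v (P v * ln (P v) + Q v * ln (Q v) - (P v + Q v) * ln ((P v + Q v) / 2))) / 2.
  under eq_bigr do rewrite ffunE.
  rewrite sumrB big_split /=.
  have -> : \sum_i (P i + Q i) / 2 * ln ((P i + Q i) / 2) =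
            (\sum_i (P i + Q i) * ln ((P i + Q i) / 2)) / 2.
    by rewrite mulr_suml; apply: eq_bigr => i _; rewrite mulrAC.
  by field.
have h2 : (\sum_v (P v - Q v) ^+ 2 / 8) / 2 <=
  (\sum_v (P v * ln (P v) + Q v * ln (Q v) - (P v + Q v) * ln ((P v + Q v) / 2))) / 2.
  rewrite ler_pM2r ?invr_gt0 ?ltr0n //.
  apply: ler_sum => v _; apply: key2; exact: distr_range.
apply: le_trans h2.
by rewrite -[\sum_v (P v - Q v) ^+ 2 / 8]mulr_suml; lra.
Qed.

Lemma coord_le {R : realType} {V : finType} (P Q : dvec R V) v :
  `|P v - Q v| <= Defs.edist P Q.
Proof.
rewrite /Defs.edist -sqrtr_sqr ler_sqrt; last by apply: sumr_ge0 => w _; exact: sqr_ge0.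
rewrite (bigD1 v) //= lerDl; apply: sumr_ge0 => w _; exact: sqr_ge0.
Qed.

Lemma ent_cont {R : realType} {V : finType} (A B : dvec R V) :
  is_distr A -> is_distr B ->
  `|entropy A - entropy B| <= 2 * #|{: interp V}|%:R * Num.sqrt (Defs.edist A B).
Proof.
move=> hA hB; rewrite /entropy opprK addrC -sumrB.
apply: le_trans (ler_norm_sum _ _ _) _.
apply: le_trans (_ : \sum_(v : interp V) 2 * Num.sqrt (Defs.edist A B) <= _).
  apply: ler_sum => v _.
  rewrite -normrN opprB.
  apply: le_trans (@phi_cont R _ _ (distr_range _ v hA) (distr_range _ v hB)) _.
  rewrite ler_pM2l // ler_sqrt ?coord_le //.
  rewrite /Defs.edist; exact: sqrtr_ge0.
rewrite sumr_const -mulr_natr; lra.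
Qed.

Lemma midp_distr {R : realType} {V : finType} (P Q : dvec R V) :
  is_distr P -> is_distr Q -> is_distr (midp P Q).
Proof.
move=> hP hQ; split.
  move=> v; rewrite ffunE.
  have /andP[? ?] := distr_range _ v hP; have /andP[? ?] := distr_range _ v hQ.
  apply/andP; split; lra.
have [_ sP] := hP; have [_ sQ] := hQ.
under eq_bigr do rewrite ffunE.
by rewrite -mulr_suml big_split /= sP sQ; field.
Qed.

Lemma probf_mid {R : realType} {V : finType} (P Q : dvec R V) phi :
  probf (midp P Q) phi = (probf P phi + probf Q phi) / 2.
Proof.
rewrite /probf; under eq_bigr do rewrite ffunE.
by rewrite -mulr_suml big_split.
Qed.

Lemma midp_ModR {R : realType} {V : finType} (rs : seq (pconstr R V)) (P Q : dvec R V) :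
  ModR rs P -> ModR rs Q -> ModR rs (midp P Q).
Proof.
move=> [hP cP] [hQ cQ]; split; first exact: midp_distr.
move=> c hc; have hp := cP c hc; have hq := cQ c hc; rewrite /sat_pconstr in hp hq *.
under eq_bigr do rewrite probf_mid.
have -> : \sum_(t <- pc_terms c) t.1 * ((probf P t.2 + probf Q t.2) / 2) =
   ((\sum_(t <- pc_terms c) t.1 * probf P t.2) + \sum_(t <- pc_terms c) t.1 * probf Q t.2) / 2.
  by rewrite -big_split mulr_suml; apply: eq_bigr => t _; rewrite /=; ring.
lra.
Qed.

Lemma ME_close {R : realType} {V : finType} (rs : seq (pconstr R V)) (P Q : dvec R V) :
  is_ME rs P -> ModR rs Q -> Defs.edist P Q ^+ 2 <= 8 * (entropy P - entropy Q).
Proof.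
move=> [mP hP] mQ.
have := @strong_conc R V P Q mP.1 mQ.1.
have := hP _ (@midp_ModR R V rs P Q mP mQ).
lra.
Qed.

Lemma edist_ge0 {R : realType} {V : finType} (P Q : dvec R V) : 0 <= Defs.edist P Q.
Proof. exact: sqrtr_ge0. Qed.

Lemma ME_unique {R : realType} {V : finType} (rs : seq (pconstr R V)) (P Q : dvec R V) :
  is_ME rs P -> is_ME rs Q -> P = Q.
Proof.
move=> hP hQ.
have h1 := @ME_close R V rs P Q hP hQ.1.
have h2 := hQ.2 _ hP.1.
have e0 := edist_ge0 P Q.
have e1 : Defs.edist P Q = 0 by nra.
apply/ffunP => v; have := coord_le P Q v; rewrite e1.
by rewrite normr_le0 subr_eq0 => /eqP.
Qed.

Lemma edist_le_n {R : realType} {V : finType} (P Q : dvec R V) :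
  is_distr P -> is_distr Q -> Defs.edist P Q <= Num.sqrt (#|{: interp V}|%:R).
Proof.
move=> hP hQ; rewrite /Defs.edist ler_sqrt ?ler0n //.
apply: le_trans (_ : \sum_(v : interp V) (1 : R) <= _); last by rewrite sumr_const.
apply: ler_sum => v _.
have /andP[? ?] := distr_range _ v hP; have /andP[? ?] := distr_range _ v hQ.
nra.
Qed.

Lemma blaschke_prop {R : realType} {V : finType} (S1 S2 : set (dvec R V)) (eps : R) :
  (exists P, S1 P /\ is_distr P) -> (exists P, S2 P /\ is_distr P) ->
  (forall P, S1 P -> is_distr P) -> (forall P, S2 P -> is_distr P) ->
  0 < eps ->
  (forall P1, S1 P1 -> exists P2, S2 P2 /\ Defs.edist P1 P2 <= blaschke S1 S2 + eps) /\
  (forall P2, S2 P2 -> exists P1, S1 P1 /\ Defs.edist P2 P1 <= blaschke S1 S2 + eps).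
Proof.
move=> [A [sA dA]] [B [sB dB]] d1 d2 e0.
set D := [set d : R | (forall P1, S1 P1 -> exists P2, S2 P2 /\ Defs.edist P1 P2 <= d) /\
        (forall P2, S2 P2 -> exists P1, S1 P1 /\ Defs.edist P2 P1 <= d)].
have D0 : D !=set0.
  exists (Num.sqrt (#|{: interp V}|%:R)); split.
    by move=> P1 s1; exists B; split => //; apply: edist_le_n => //; exact: d1.
  by move=> P2 s2; exists A; split => //; apply: edist_le_n => //; exact: d2.
have : inf D < blaschke S1 S2 + eps by rewrite /blaschke -/D; lra.
move=> /(inf_lt D0) [y [h1 h2] hy]; split.
  move=> P1 s1; have [P2 [s2 h]] := h1 P1 s1; exists P2; split => //; lra.
move=> P2 s2; have [P1 [s1 h]] := h2 P2 s2; exists P1; split => //; lra.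
Qed.

Lemma cvg_sumr {R : realType} {I : Type} (r : seq I) (p : pred I)
  (f : nat -> I -> R) (g : I -> R) :
  (forall v, (fun i => f i v) @ \oo --> g v) ->
  (fun i => \sum_(v <- r | p v) f i v) @ \oo --> \sum_(v <- r | p v) g v.
Proof.
move=> h; elim: r => [|a r IH].
  rewrite big_nil; under eq_cvg do rewrite big_nil; exact: cvg_cst.
rewrite big_cons; under eq_cvg do rewrite big_cons.
case: (p a) => //; exact: cvgD.
Qed.

Lemma ME_conv {R : realType} {V : finType} (rsK : nat -> seq (pconstr R V))
  (rs : seq (pconstr R V)) (Pi : nat -> dvec R V) (P : dvec R V) :
  (forall i, is_ME (rsK i) (Pi i)) -> is_ME rs P ->
  (fun i => blaschke (ModR (rsK i)) (ModR rs)) @ \oo --> (0 : R) ->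
  forall v, (fun i => Pi i v) @ \oo --> P v.
Proof.
move=> hPi hP hb v.
set c : R := 2 * #|{: interp V}|%:R.
set g : R -> R := fun t => Num.sqrt (16 * c * Num.sqrt t) + t.
set t : nat -> R := fun i => blaschke (ModR (rsK i)) (ModR rs) + harmonic i.
have key : forall i, `|Pi i v - P v| <= g (t i).
  move=> i.
  have [h1 h2] := @blaschke_prop R V (ModR (rsK i)) (ModR rs) (harmonic i)
    (ex_intro _ (Pi i) (conj (hPi i).1 (hPi i).1.1))
    (ex_intro _ P (conj hP.1 hP.1.1))
    (fun Q hQ => hQ.1) (fun Q hQ => hQ.1) (harmonic_gt0 i).
  have [Q [mQ eQ]] := h1 _ (hPi i).1.
  have [P' [mP' eP']] := h2 _ hP.1.
  rewrite -/(t i) in eQ eP'.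
  have hPP' := (hPi i).2 _ mP'.
  have c1 := @ent_cont R V P P' hP.1.1 mP'.1.
  have c2 := @ent_cont R V (Pi i) Q (hPi i).1.1 mQ.1.
  rewrite -/c in c1 c2.
  have c0 : 0 <= c by rewrite /c mulr_ge0 ?ler0n.
  have s1 : Num.sqrt (Defs.edist P P') <= Num.sqrt (t i) by rewrite ler_sqrt // (le_trans (edist_ge0 _ _) eP').
  have s2 : Num.sqrt (Defs.edist (Pi i) Q) <= Num.sqrt (t i) by rewrite ler_sqrt // (le_trans (edist_ge0 _ _) eQ).
  have m1 : c * Num.sqrt (Defs.edist P P') <= c * Num.sqrt (t i) by rewrite ler_wpM2l.
  have m2 : c * Num.sqrt (Defs.edist (Pi i) Q) <= c * Num.sqrt (t i) by rewrite ler_wpM2l.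
  have hc := @ME_close R V rs P Q hP mQ.
  have hH : entropy P - entropy Q <= 2 * (c * Num.sqrt (t i)).
    move: c1 c2; rewrite !ler_norml => /andP[c1 c1'] /andP[c2 c2'].
    lra.
  have eq1 : Defs.edist P Q <= Num.sqrt (16 * c * Num.sqrt (t i)).
    rewrite -(ger0_norm (edist_ge0 P Q)) -sqrtr_sqr ler_sqrt; first lra.
    by rewrite mulr_ge0 ?sqrtr_ge0 // mulr_ge0.
  have d1 := coord_le P Q v.
  have d2 := coord_le (Pi i) Q v.
  rewrite /g.
  have -> : Pi i v - P v = (Pi i v - Q v) - (P v - Q v) by ring.
  apply: le_trans (ler_normB _ _) _.
  lra.
have tc : t @ \oo --> 0.
  rewrite -[0 : R]addr0; apply: cvgD => //; exact: cvg_harmonic.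
have s0 : (fun i => Num.sqrt (t i)) @ \oo --> (0 : R).
  rewrite -sqrtr0; exact: (continuous_cvg _ (@sqrt_continuous R 0) tc).
have s1 : (fun i => 16 * c * Num.sqrt (t i)) @ \oo --> (0 : R).
  rewrite -(mulr0 (16 * c)); exact: cvgMr.
have s2 : (fun i => Num.sqrt (16 * c * Num.sqrt (t i))) @ \oo --> (0 : R).
  rewrite -sqrtr0; exact: (continuous_cvg _ (@sqrt_continuous R 0) s1).
have gc : (fun i => g (t i)) @ \oo --> (0 : R).
  rewrite -[0 : R]addr0; exact: cvgD.
apply: (@squeeze_cvgr _ _ _ _ (fun i => P v - g (t i)) (fun i => P v + g (t i))).
- apply: nearW => i; have := key i; rewrite ler_norml => /andP[k1 k2].
  apply/andP; split; lra.
- rewrite -[X in _ --> X]subr0; apply: cvgB => //; exact: cvg_cst.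
- rewrite -[X in _ --> X]addr0; apply: cvgD => //; exact: cvg_cst.
Qed.

Definition subw {V : finType} {NC NR : Type} (C D : concept NC NR) (I : pworld V NC NR) : Prop :=
  cext I C `<=` cext I D.

Definition okw {V : finType} {NC NR : Type} (T : seq (gci V NC NR))
  (q : pworld V NC NR -> Prop) (v : interp V) : Prop :=
  exists I, ModT T I /\ pw_val I = v /\ q I.

Lemma regroup {R : realType} {V : finType} {NC NR : Type} (P : alcp R V NC NR)
  (p : pred (interp V)) :
  \sum_(w | p (pw_val (ap_world P w))) ap_pr P w = \sum_(v | p v) Defs.induced P v.
Proof.
rewrite (partition_big (fun w => pw_val (ap_world P w)) p) //=.
apply: eq_bigr => v pv; rewrite ffunE; apply: eq_bigl => w.
by case: eqP => [->|]; rewrite ?pv ?andbF ?andbT.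
Qed.

Lemma sum_eq_nz {R : realType} {V : finType} (Pm : dvec R V) (p q : pred (interp V)) :
  (forall w, Pm w != 0 -> p w = q w) ->
  \sum_(w | p w) Pm w = \sum_(w | q w) Pm w.
Proof.
move=> h; rewrite big_mkcond [RHS]big_mkcond; apply: eq_bigr => w _.
have [->|nz] := eqVneq (Pm w) 0; first by case: (p w); case: (q w).
by rewrite h.
Qed.

Definition LO {R : realType} {V : finType} {NC NR : Type} (T : seq (gci V NC NR))
  (C D : concept NC NR) (kappa : pform V) (Q : dvec R V) : R :=
  (\sum_(v | fsat v kappa && ~~ `[< okw T (fun I => ~ subw C D I) v >]) Q v) /
  (\sum_(v | fsat v kappa) Q v).

Definition HI {R : realType} {V : finType} {NC NR : Type} (T : seq (gci V NC NR))
  (C D : concept NC NR) (kappa : pform V) (Q : dvec R V) : R :=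
  (\sum_(v | fsat v kappa && `[< okw T (subw C D) v >]) Q v) /
  (\sum_(v | fsat v kappa) Q v).

Lemma mass_eq {R : realType} {V : finType} {NC NR : Type} (P : alcp R V NC NR) kappa :
  ctx_mass P kappa = \sum_(v | fsat v kappa) Defs.induced P v.
Proof. exact: (regroup P (fun v => fsat v kappa)). Qed.

Lemma condprob_bounds {R : realType} {V : finType} {NC NR : Type}
  (K : kb R V NC NR) (P : alcp R V NC NR) C D kappa :
  ME_model K P -> 0 < ctx_mass P kappa ->
  LO K.2 C D kappa (Defs.induced P) <= condprob P C D kappa <= HI K.2 C D kappa (Defs.induced P).
Proof.
move=> [hT _] m0; rewrite /LO /HI /condprob -mass_eq.
rewrite !ler_pM2r ?invr_gt0 //.
rewrite -(regroup P (fun v => fsat v kappa && ~~ `[< okw K.2 (fun I => ~ subw C D I) v >])).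
rewrite -(regroup P (fun v => fsat v kappa && `[< okw K.2 (subw C D) v >])).
apply/andP; split.
  rewrite big_mkcond [X in _ <= X]big_mkcond; apply: ler_sum => w _ /=.
  case: (fsat _ kappa) => //=.
  case: asboolP => [ok|nok] /=.
    by case: ifP => // _; exact: ap_pr_ge0.
  case: asboolP => [//|ns]; exfalso; apply: nok.
  by exists (ap_world P w); split => //.
rewrite big_mkcond [X in _ <= X]big_mkcond; apply: ler_sum => w _ /=.
case: (fsat _ kappa) => //=.
case: asboolP => [hs|nhs] /=.
  case: asboolP => [//|nc]; exfalso; apply: nc.
  by exists (ap_world P w); split => //.
by case: ifP => // _; exact: ap_pr_ge0.
Qed.

Definition pickw {V : finType} {NC NR : Type} (T : seq (gci V NC NR))
  (q : pworld V NC NR -> Prop) (I0 : pworld V NC NR) (v : interp V) : pworld V NC NR :=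
  match pselect (okw T q v) with
  | left h => proj1_sig (cid h)
  | right _ =>
    match pselect (okw T (fun _ => True) v) with
    | left h => proj1_sig (cid h)
    | right _ => I0
    end
  end.

Lemma pickw_spec {V : finType} {NC NR : Type} (T : seq (gci V NC NR)) q I0 v :
  ModT T I0 ->
  [/\ ModT T (pickw T q I0 v),
      okw T (fun _ => True) v -> pw_val (pickw T q I0 v) = v &
      okw T q v -> q (pickw T q I0 v)].
Proof.
move=> h0; rewrite /pickw.
case: pselect => [h|nh].
  by case: (cid h) => I [? [? ?]] /=; split.
case: pselect => [h|nh2].
  by case: (cid h) => I [? [? ?]] /=; split.
by split => // [[I [? [? ?]]]]; exfalso; apply: nh2; exists I.
Qed.

Lemma nz_ok {R : realType} {V : finType} {NC NR : Type} (K : kb R V NC NR)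
  (P : alcp R V NC NR) v :
  ME_model K P -> Defs.induced P v != 0 -> okw K.2 (fun _ => True) v.
Proof.
move=> [hT _]; rewrite ffunE => nz; apply: contrapT => nok; move: nz.
rewrite big1 ?eqxx // => w /eqP hw; exfalso; apply: nok.
by exists (ap_world P w).
Qed.

Lemma alcp_world {R : realType} {V : finType} {NC NR : Type} (K : kb R V NC NR)
  (P : alcp R V NC NR) : ME_model K P -> exists I, ModT K.2 I.
Proof.
move=> [hT _]; case: (pickP (fun _ : ap_W P => true)) => [w|h].
  by exists (ap_world P w).
have e := ap_pr_sum1 P; rewrite big1 in e.
  by move/eqP: e; rewrite eq_sym oner_eq0.
by move=> w _; have := h w.
Qed.

Lemma construct {R : realType} {V : finType} {NC NR : Type} (K : kb R V NC NR)
  (P0 : alcp R V NC NR) C D kappa (q : pworld V NC NR -> Prop) (b : pred (interp V)) :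
  ME_model K P0 ->
  (forall v I, ModT K.2 I -> pw_val I = v -> (okw K.2 q v -> q I) -> (subw C D I <-> b v)) ->
  exists P, ME_model K P /\
    condprob P C D kappa =
    (\sum_(v | fsat v kappa && b v) Defs.induced P0 v) /
    (\sum_(v | fsat v kappa) Defs.induced P0 v).
Proof.
move=> hM hb.
have [I0 hI0] := alcp_world _ _ hM.
set Pm := Defs.induced P0.
have hd : is_distr Pm by case: hM => _ [[]].
have ge0 : forall v : interp V, 0 <= Pm v.
  by move=> v; have /andP[] := distr_range _ v hd.
set f := pickw K.2 q I0.
have hf : forall v, Pm v != 0 -> [/\ ModT K.2 (f v), pw_val (f v) = v & (okw K.2 q v -> q (f v))].
  move=> v nz; have [h1 h2 h3] := pickw_spec K.2 q I0 v hI0.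
  by split => //; apply: h2; exact: (nz_ok _ _ _ hM nz).
pose P := @ALCP R V NC NR (interp V) f (fun v => Pm v) ge0 hd.2.
have indP : Defs.induced P = Pm.
  apply/ffunP => v; rewrite ffunE /=.
  rewrite (@sum_eq_nz R V Pm _ (fun w => w == v)).
    by rewrite big_pred1_eq.
  by move=> w nz; have [_ -> _] := hf w nz.
exists P; split.
  split; last by rewrite indP; case: hM.
  move=> w /=; rewrite /f; by have [] := pickw_spec K.2 q I0 w hI0.
rewrite /condprob /ctx_mass /=.
congr (_ / _); apply: sum_eq_nz => w nz; have [h1 h2 h3] := hf w nz.
  rewrite h2; congr (_ && _); apply/asboolP/idP => [hs|bw].
    by apply/(hb w (f w) h1 h2 h3).
  by apply/(hb w (f w) h1 h2 h3).
by rewrite h2.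
Qed.

Lemma belief_lo_eq {R : realType} {V : finType} {NC NR : Type} (K : kb R V NC NR)
  (M0 : alcp R V NC NR) C D kappa :
  ME_model K M0 -> belief_defined K kappa ->
  belief_lo K C D kappa = LO K.2 C D kappa (Defs.induced M0).
Proof.
move=> hM hdef.
set L := LO K.2 C D kappa (Defs.induced M0).
have inS : belief_values K C D kappa L.
  have [P [hP e]] := construct K M0 C D kappa (fun I => ~ subw C D I)
    (fun v => ~~ `[< okw K.2 (fun I => ~ subw C D I) v >]) hM
    (fun v I hI hv hq => conj
      (fun hs => introN (asboolP _) (fun ok => hq ok hs))
      (fun hn => contrapT (fun ns => negP hn (introT (asboolP _)
         (ex_intro _ I (conj hI (conj hv ns))))))).
  by exists P; split.
have lb : forall x, belief_values K C D kappa x -> L <= x.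
  move=> x [P [hP ->]].
  have e : Defs.induced P = Defs.induced M0 by exact: (ME_unique _ _ _ hP.2 hM.2).
  have := condprob_bounds _ _ C D kappa hP (hdef P hP); rewrite e => /andP[] //.
apply/eqP; rewrite eq_le; apply/andP; split.
  have hl : has_lbound (belief_values K C D kappa) by exists L => y /lb.
  exact: (ge_inf hl inS).
apply: lb_le_inf; first by exists L.
by move=> y /lb.
Qed.

Lemma belief_hi_eq {R : realType} {V : finType} {NC NR : Type} (K : kb R V NC NR)
  (M0 : alcp R V NC NR) C D kappa :
  ME_model K M0 -> belief_defined K kappa ->
  belief_hi K C D kappa = HI K.2 C D kappa (Defs.induced M0).
Proof.
move=> hM hdef.
set L := HI K.2 C D kappa (Defs.induced M0).
have inS : belief_values K C D kappa L.
  have [P [hP e]] := construct K M0 C D kappa (subw C D)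
    (fun v => `[< okw K.2 (subw C D) v >]) hM
    (fun v I hI hv hq => conj
      (fun hs => introT (asboolP _) (ex_intro _ I (conj hI (conj hv hs))))
      (fun hn => hq (elimT (asboolP _) hn))).
  by exists P; split.
have ub : forall x, belief_values K C D kappa x -> x <= L.
  move=> x [P [hP ->]].
  have e : Defs.induced P = Defs.induced M0 by exact: (ME_unique _ _ _ hP.2 hM.2).
  have := condprob_bounds _ _ C D kappa hP (hdef P hP); rewrite e => /andP[] //.
apply/eqP; rewrite eq_le; apply/andP; split.
  apply: ge_sup; first by exists L.
  by move=> y /ub.
have hu : has_ubound (belief_values K C D kappa) by exists L => y /ub.
exact: (ub_le_sup hu inS).
Qed.

Lemma okw_eq {V : finType} {NC NR : Type} (T1 T2 : seq (gci V NC NR)) q v :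
  (forall I, ModT T1 I <-> ModT T2 I) -> okw T1 q v = okw T2 q v.
Proof.
move=> h; apply/propext; split => -[I [hI rest]]; exists I; split => //; exact/h.
Qed.

Theorem theorem9 (R : realType) (V : finType) (NC NR : Type)
  (Ks : nat -> kb R V NC NR) (K : kb R V NC NR)
  (C D : concept NC NR) (kappa : pform V) :
  (forall i, ME_consistent (Ks i)) ->
  ME_consistent K ->
  kb_converges Ks K ->
  (forall i, belief_defined (Ks i) kappa) ->
  belief_defined K kappa ->
  ((fun i => belief_lo (Ks i) C D kappa) @ \oo --> belief_lo K C D kappa) /\
  ((fun i => belief_hi (Ks i) C D kappa) @ \oo --> belief_hi K C D kappa).
Proof.
move=> hKs hK [hT hb] hdKs hdK.
have [M0 hM0] := hK.
pose Mi i := proj1_sig (cid (hKs i)).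
have hMi : forall i, ME_model (Ks i) (Mi i) := fun i => proj2_sig (cid (hKs i)).
pose Pi i := Defs.induced (Mi i).
have conv := ME_conv (fun i => (Ks i).1) K.1 Pi (Defs.induced M0)
  (fun i => (hMi i).2) hM0.2 hb.
have den0 : \sum_(v | fsat v kappa) Defs.induced M0 v != 0.
  by rewrite -mass_eq; apply: lt0r_neq0; exact: hdK.
have cden : (fun i => \sum_(v | fsat v kappa) Pi i v) @ \oo -->
            \sum_(v | fsat v kappa) Defs.induced M0 v.
  by apply: cvg_sumr => v; exact: conv.
rewrite (belief_lo_eq _ _ C D kappa hM0 hdK) (belief_hi_eq _ _ C D kappa hM0 hdK).
split.
  have eLO : forall i, belief_lo (Ks i) C D kappa = LO K.2 C D kappa (Pi i).
    move=> i; rewrite (belief_lo_eq _ _ C D kappa (hMi i) (hdKs i)) /LO.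
    congr (_ / _); apply: eq_bigl => v.
    by rewrite (okw_eq _ _ _ v (hT i)).
  under eq_cvg do rewrite eLO.
  apply: cvgM; first by apply: cvg_sumr => v; exact: conv.
  exact: cvgV.
have eHI : forall i, belief_hi (Ks i) C D kappa = HI K.2 C D kappa (Pi i).
  move=> i; rewrite (belief_hi_eq _ _ C D kappa (hMi i) (hdKs i)) /HI.
  congr (_ / _); apply: eq_bigl => v.
  by rewrite (okw_eq _ _ _ v (hT i)).
under eq_cvg do rewrite eHI.
apply: cvgM; first by apply: cvg_sumr => v; exact: conv.
exact: cvgV.
Qed.
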